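(* Let $\Gamma=\{f_1,\dots,f_n\}$ be a family of weight-functions invariant under translations, i.e. $f_i(x_1+\lambda,\dots,x_n+\lambda)=f_i(x_1,\dots,x_n)$ for every $i$, every $\mathbf{x}\in[0,1]^n$ and every $\lambda\in[0,1]$ with $(x_1+\lambda,\dots,x_n+\lambda)\in[0,1]^n$. Then $\mathsf{BGM}_\Gamma$ (i.e. $\mathbf{x}\mapsto\sum_i f_i(\mathbf{x})x_i$) is a pre-aggregation function which is $(k,\dots,k)$-increasing for every $k>0$.
   Context: A family of weight-functions (FWF) is a family $\Gamma=\{f_i:[0,1]^n\to[0,1]\mid 1\le i\le n\}$ with $\sum_{i=1}^n f_i(\mathbf{x})=1$ for all $\mathbf{x}\in[0,1]^n$; $\mathsf{BGM}_\Gamma(\mathbf{x})=\sum_{i=1}^n f_i(\mathbf{x})\,x_i$. For a nonzero $\mathbf{r}\in\mathbb{R}^n$, $F:[0,1]^n\to[0,1]$ is $\mathbf{r}$-increasing if $F(\mathbf{x})\le F(x_1+tr_1,\dots,x_n+tr_n)$ for all $\mathbf{x}\in[0,1]^n$ and $t>0$ with $(x_1+tr_1,\dots,x_n+tr_n)\in[0,1]^n$. $F$ is a pre-aggregation function if $F(0,\dots,0)=0$, $F(1,\dots,1)=1$ and $F$ is $\mathbf{r}$-increasing for some nonzero $\mathbf{r}\in[0,1]^n$. *)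

(* Defs.v *)
From HB Require Import structures.
From mathcomp Require Import all_boot all_order all_algebra.
From mathcomp Require Import reals.
Set Implicit Arguments. Unset Strict Implicit. Unset Printing Implicit Defensive.
Import Order.TTheory GRing.Theory Num.Theory.
Local Open Scope ring_scope.

Section Defs.
Variables (R : realType) (n : nat).

Definition in_cube (x : 'I_n -> R) : Prop := forall i, 0 <= x i <= 1.

Definition FWF (f : 'I_n -> ('I_n -> R) -> R) : Prop :=
  (forall i x, in_cube x -> 0 <= f i x <= 1) /\
  (forall x, in_cube x -> \sum_(i < n) f i x = 1).

Definition BGM (f : 'I_n -> ('I_n -> R) -> R) (x : 'I_n -> R) : R :=
  \sum_(i < n) f i x * x i.

Definition r_increasing (r : 'I_n -> R) (F : ('I_n -> R) -> R) : Prop :=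
  forall (x : 'I_n -> R) (t : R), in_cube x -> 0 < t ->
    in_cube (fun i => x i + t * r i) -> F x <= F (fun i => x i + t * r i).

Definition pre_aggregation (F : ('I_n -> R) -> R) : Prop :=
  (forall x, in_cube x -> 0 <= F x <= 1) /\
  F (fun _ => 0) = 0 /\ F (fun _ => 1) = 1 /\
  exists r : 'I_n -> R, r <> (fun _ => 0) /\ in_cube r /\ r_increasing r F.

Definition translation_invariant (g : ('I_n -> R) -> R) : Prop :=
  forall (x : 'I_n -> R) (lam : R), in_cube x -> 0 <= lam <= 1 ->
    in_cube (fun i => x i + lam) -> g (fun i => x i + lam) = g x.

End Defs.

(* Main.v *)
Require Import Defs.
From HB Require Import structures.
From mathcomp Require Import all_boot all_order all_algebra.
From mathcomp Require Import reals.
Import Order.TTheory GRing.Theory Num.Theory.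
Local Open Scope ring_scope.

Theorem corollary2 (R : realType) (n : nat) (f : 'I_n -> ('I_n -> R) -> R) :
  FWF f -> (forall i, translation_invariant (f i)) ->
  pre_aggregation (BGM f) /\
  (forall k : R, 0 < k -> r_increasing (fun _ => k) (BGM f)).
Proof.
move=> [f01 fsum] ti.
case: n f f01 fsum ti => [|m] f f01 fsum ti.
  have := fsum (fun _ => 0) (fun i => match i with Ordinal _ h => False_ind _ (notF h) end).
  by rewrite big_ord0 => /eqP; rewrite eq_sym oner_eq0.
have incr : forall k : R, 0 < k -> r_increasing (fun _ => k) (BGM f).
  move=> k k0 x t hx t0 hy.
  have lam01 : 0 <= t * k <= 1.
    have := hx ord0; have := hy ord0 => /= /andP[_ h1] /andP[h0 _].
    apply/andP; split; first by rewrite mulr_ge0 // ltW.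
    by apply: le_trans h1; rewrite lerDr.
  rewrite /BGM.
  under [X in _ <= X]eq_bigr => i _ do rewrite (ti i x (t * k) hx lam01 hy) mulrDr.
  rewrite big_split /= -mulr_suml fsum // mul1r lerDl.
  by case/andP: lam01.
split=> //.
split.
  move=> x hx; rewrite /BGM; apply/andP; split.
    apply: sumr_ge0 => i _; case/andP: (f01 i x hx) => a _; case/andP: (hx i) => b _.
    exact: mulr_ge0.
  rewrite -(fsum x hx); apply: ler_sum => i _.
  case/andP: (f01 i x hx) => a _; case/andP: (hx i) => _ b.
  by rewrite ler_piMr.
have c0 : in_cube (fun _ : 'I_m.+1 => (0:R)) by move=> i; rewrite lexx ler01.
have c1 : in_cube (fun _ : 'I_m.+1 => (1:R)) by move=> i; rewrite lexx ler01.
split; first by rewrite /BGM big1 // => i _; rewrite mulr0.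
split.
  rewrite /BGM -[RHS](fsum _ c1); apply: eq_bigr => i _; exact: mulr1.
exists (fun _ => 1); split; last by split=> //; exact: incr ltr01.
by move/(congr1 (fun g => g ord0))/eqP; rewrite oner_eq0.
Qed.
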